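(* For $d\ge0$ let $\Phi_d(x):=\sum_{n\ge1}A_{d,n}x^{n-1}$ and let $\Phi(x):=\sum_{n\ge1}A_nx^{n-1}$. Then for all $x\ge0$, $\Phi_d(x)\to\Phi(x)$ as $d\to\infty$ (in $[0,\infty]$). Moreover, for all $d\ge0$ and $t\in[0,1)$ there exists $A=A(d,t)<\infty$ such that $\Phi_d(x)\le A$ for all $x\in[0,t]$.
   Context: Rooted unlabeled trees: $\mathcal{X}_0=\{\bullet\}$ consists of the trivial tree. For $d\ge1$, an element $t\in\mathcal{X}_d$ is a family $t=\{N_\tau\}_{\tau\in\mathcal{X}_{d-1}}$ of non-negative integers with finite support ($N_\tau$ is the number of children of the root whose subtree is $\tau$). The size is $|\bullet|=1$ and $|t|=1+\sum_\tau N_\tau|\tau|$. $A_{d,n}$ is the number of $t\in\mathcal{X}_d$ with $|t|=n$ (rooted unlabeled trees with $n$ nodes and depth at most $d$), and $A_n$ is the number of rooted unlabeled trees with $n$ nodes (with no depth restriction). *)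

(* Defs.v *)
From HB Require Import structures.
From Stdlib Require Import List Permutation.
From mathcomp Require Import all_boot all_order all_algebra.
From mathcomp Require Import finmap.
From mathcomp Require Import all_classical all_reals all_analysis.

Set Implicit Arguments.
Unset Strict Implicit.
Unset Printing Implicit Defensive.

Import Order.TTheory GRing.Theory Num.Theory.
Local Open Scope classical_set_scope.

Inductive rtree : Type := RNode : seq rtree -> rtree.

Fixpoint tsize (t : rtree) : nat :=
  let: RNode l := t in (sumn (map tsize l)).+1.

Fixpoint depth (t : rtree) : nat :=
  let: RNode l := t in foldr maxn 0 (map (fun c => (depth c).+1) l).

Inductive iso : rtree -> rtree -> Prop :=
  | iso_node (l1 l2 l2' : seq rtree) :
      Permutation l2 l2' -> Forall2 iso l1 l2' -> iso (RNode l1) (RNode l2).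

Definition nb_classes (P : set rtree) : nat :=
  #|` fset_set [set [set u | iso t u] | t in P] |.

Definition A_dn (d n : nat) : nat :=
  nb_classes [set t | tsize t = n /\ (depth t <= d)%N].

Definition A_n (n : nat) : nat := nb_classes [set t | tsize t = n].

Local Open Scope ring_scope.
Local Open Scope ereal_scope.

Definition Phi_d (R : realType) (d : nat) (x : R) : \bar R :=
  \sum_(1 <= n <oo) ((A_dn d n)%:R * x ^+ n.-1)%:E.

Definition Phi (R : realType) (x : R) : \bar R :=
  \sum_(1 <= n <oo) ((A_n n)%:R * x ^+ n.-1)%:E.

(* Main.v *)
Require Import Defs.
From HB Require Import structures.
From Stdlib Require Import List Permutation.
From mathcomp Require Import all_boot all_order all_algebra.
From mathcomp Require Import all_classical all_reals all_analysis.
From mathcomp Require Import finmap.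
From mathcomp Require Import ring lra.
Import Order.TTheory GRing.Theory Num.Theory.
Set Implicit Arguments.
Unset Strict Implicit.
Unset Printing Implicit Defensive.

Section Trees.

Definition rtree_ind' (P : rtree -> Prop)
  (H : forall l, List.Forall P l -> P (RNode l)) : forall t, P t :=
  fix F t := match t with
    RNode l => H l ((fix G l := match l return List.Forall P l with
                      | nil => List.Forall_nil P
                      | cons x l' => List.Forall_cons x (F x) (G l') end) l) end.

Fixpoint enc (t : rtree) : GenTree.tree unit :=
  let: RNode l := t in GenTree.Node 0 (map enc l).
Fixpoint dec (g : GenTree.tree unit) : rtree :=
  match g with GenTree.Leaf _ => RNode [::] | GenTree.Node _ l => RNode (map dec l) end.
Lemma encK : cancel enc dec.
Proof.
elim/rtree_ind' => l IH /=; congr RNode.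
elim: l IH => //= x l IHl H; inversion H; subst; rewrite H2 IHl //.
Qed.

End Trees.

HB.instance Definition _ := Countable.copy rtree (can_type encK).

Definition leT (x y : rtree) := (choice.pickle x <= choice.pickle y)%N.
Lemma leT_total : total leT.
Proof. by move=> x y; rewrite /leT leq_total. Qed.
Lemma leT_trans : transitive leT.
Proof. by move=> x y z; rewrite /leT; apply: leq_trans. Qed.
Lemma leT_anti : antisymmetric leT.
Proof.
move=> x y; rewrite /leT -eqn_leq => /eqP H.
by have := choice.pickleK x; rewrite H choice.pickleK => -[].
Qed.

Fixpoint tcanon (t : rtree) : rtree :=
  let: RNode l := t in RNode (sort leT (map tcanon l)).

Definition children (t : rtree) := let: RNode l := t in l.

Lemma Perm_perm (T : eqType) (s1 s2 : seq T) : Permutation s1 s2 -> perm_eq s1 s2.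
Proof.
elim => //=.
- by move=> x l l' _ H; rewrite perm_cons.
- by move=> x y l; rewrite -(cat1s x) -(cat1s y) perm_catCA.
- by move=> l l' l'' _ H1 _ H2; apply: perm_trans H1 H2.
Qed.

Lemma perm_map_ex (T U : eqType) (f : T -> U) (l1 l2 : seq T) :
  perm_eq (map f l1) (map f l2) ->
  exists l2', Permutation l2 l2' /\ map f l2' = map f l1.
Proof.
elim: l1 l2 => [|a l1 IH] l2 /=.
  case: l2 => [|b l2] H; first by exists [::].
  by move/perm_size: H.
move=> H.
have : f a \in map f l2 by rewrite -(perm_mem H) mem_head.
case/mapP => b bin fab.
case/splitPr: bin H => p1 p2 H.
have H' : perm_eq (map f l1) (map f (p1 ++ p2)).
  rewrite -(perm_cons (f a)); apply: (perm_trans H).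
  rewrite !map_cat /= fab -cat1s perm_catCA //.
case: (IH _ H') => l' [Hp Hm].
exists (b :: l'); split; last by rewrite /= Hm fab.
apply: Permutation_trans (Permutation_sym (Permutation_middle p1 p2 b)) _.
by apply: perm_skip.
Qed.

Lemma Forall2_map_canon l1 l2 :
  List.Forall (fun x => forall u, iso x u -> tcanon x = tcanon u) l1 ->
  List.Forall2 iso l1 l2 -> map tcanon l1 = map tcanon l2.
Proof.
move=> IH H; elim: H IH => //= x y l1' l2' Hxy _ IHl IH.
inversion IH; subst; congr cons; first by apply: H1.
by apply: IHl.
Qed.

Lemma canon_iso t u : iso t u -> tcanon t = tcanon u.
Proof.
elim/rtree_ind': t u => l1 IH u H; inversion H; subst => /=; congr RNode.
rewrite (Forall2_map_canon IH H2).
apply/perm_sortP; [exact: leT_total|exact: leT_trans|exact: leT_anti|].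
by apply/perm_map; rewrite perm_sym; apply: Perm_perm.
Qed.

Lemma iso_canon t u : tcanon t = tcanon u -> iso t u.
Proof.
elim/rtree_ind': t u => l1 IH [l2] /= [] /perm_sortP H.
have {}H := H leT_total leT_trans leT_anti.
case: (perm_map_ex H) => l2' [Hp Hm].
apply: (@iso_node l1 l2 l2' Hp).
elim: l1 l2' IH Hm {H Hp} => [|x l1 IHl] [|y l2'] IH //= [] Hxy Hm.
inversion IH; subst; constructor; first by apply: H1.
by apply: IHl.
Qed.

Lemma canon_idem t : tcanon (tcanon t) = tcanon t.
Proof.
elim/rtree_ind': t => l IH /=; congr RNode.
apply/perm_sortP; [exact: leT_total|exact: leT_trans|exact: leT_anti|].
have E : map tcanon (map tcanon l) = map tcanon l.
  rewrite -map_comp; elim: l IH => //= x l IHl H; inversion H; subst.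
  by rewrite /= H2 IHl.
by rewrite -{2}E; apply/perm_map; rewrite perm_sort.
Qed.

Lemma foldr_maxn_big (T : Type) (g : T -> nat) s :
  foldr maxn 0 (map g s) = \max_(x <- s) g x.
Proof. by elim: s => [|x s IH]; rewrite ?big_nil ?big_cons //= IH. Qed.

Lemma tsize_canon t : Defs.tsize (tcanon t) = Defs.tsize t.
Proof.
elim/rtree_ind': t => l IH /=; congr S.
rewrite (perm_sumn (perm_map _ (permEl (perm_sort _ _)))) -map_comp.
elim: l IH => //= x l IHl H; inversion H; subst.
by rewrite /= H2 IHl.
Qed.

Lemma depth_canon t : depth (tcanon t) = depth t.
Proof.
elim/rtree_ind': t => l IH /=.
rewrite !foldr_maxn_big (perm_big _ (permEl (perm_sort _ _))) big_map.
elim: l IH => [|x l IHl] H; rewrite ?big_nil // !big_cons; inversion H; subst.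
by rewrite H2 IHl.
Qed.

Lemma depth_lt_size t : (depth t < Defs.tsize t)%N.
Proof.
elim/rtree_ind': t => l IH /=; rewrite ltnS.
elim: l IH => //= x l IHl H; inversion H; subst.
rewrite geq_max; apply/andP; split.
  by apply: leq_trans H2 _; rewrite leq_addr.
by apply: leq_trans (IHl H3) _; rewrite leq_addl.
Qed.

Lemma depth_child l x : x \in l -> ((depth x).+1 <= depth (RNode l))%N.
Proof.
elim: l => //= y l IH; rewrite in_cons => /orP [/eqP ->|/IH H].
  by rewrite leq_max leqnn.
by rewrite leq_max H orbT.
Qed.

Lemma canon_sorted l : tcanon (RNode l) = RNode l -> sorted leT l.
Proof. by move=> /= [] <-; apply: (sort_sorted leT_total). Qed.

Lemma canon_child l x : tcanon (RNode l) = RNode l -> x \in l -> tcanon x = x.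
Proof.
move=> /= [] E; rewrite -E mem_sort => /mapP [y _ ->].
exact: canon_idem.
Qed.

Lemma size_child l x : x \in l -> (Defs.tsize x < Defs.tsize (RNode l))%N.
Proof.
move=> H /=; rewrite ltnS.
elim: l H => //= y l IH; rewrite in_cons => /orP [/eqP ->|/IH H].
  by rewrite leq_addr.
by apply: leq_trans H _; rewrite leq_addl.
Qed.


Lemma sum_count_mem (K l : seq rtree) (w : rtree -> nat) :
  uniq K -> {subset l <= K} ->
  (\sum_(k <- K) count_mem k l * w k)%N = sumn (map w l).
Proof.
move=> uK; elim: l => [|x l IH] sub /=.
  by rewrite big1 // => k _; rewrite mul0n.
rewrite -IH; last by move=> y yl; apply: sub; rewrite in_cons yl orbT.
under eq_bigr do rewrite mulnDl.
rewrite big_split /=; congr (_ + _)%N.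
have xK : x \in K by apply: sub; rewrite mem_head.
rewrite (big_rem x) //= eqxx mul1n big1_seq ?addn0 // => k /andP[_].
by rewrite mem_rem_uniq // => /andP[/= /negbTE]; rewrite eq_sym => ->.
Qed.

Lemma size_le_sumn (l : seq rtree) : (size l <= sumn (map Defs.tsize l))%N.
Proof. by elim: l => //= -[l'] l IH /=; rewrite addSn ltnS (leq_trans IH) // leq_addl. Qed.

Lemma tsize_le_sumn (s : seq rtree) c : c \in s ->
  (Defs.tsize c <= sumn (map Defs.tsize s))%N.
Proof.
elim: s => //= y s IH; rewrite in_cons => /orP [/eqP ->|/IH H].
  by rewrite leq_addr.
by apply: leq_trans H _; rewrite leq_addl.
Qed.

Section Bound.
Variable R : realType.
Local Open Scope ring_scope.

Definition bounded (Q : rtree -> Prop) (t B : R) :=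
  forall s : seq rtree, uniq s -> (forall c, c \in s -> Q c) ->
    \sum_(c <- s) t ^+ (Defs.tsize c).-1 <= B.

Lemma bounded_sub (Q Q' : rtree -> Prop) t B :
  (forall c, Q' c -> Q c) -> bounded Q t B -> bounded Q' t B.
Proof. by move=> H HB s us Hs; apply: HB => // c /Hs /H. Qed.

Lemma geom_bound (y t : R) n : 0 <= y -> y <= t -> t < 1 ->
  \sum_(j < n) y ^+ j <= 1 + y / (1 - t).
Proof.
move=> y0 yt t1.
have E : (\sum_(j < n) y ^+ j) * (1 - y) = 1 - y ^+ n.
  elim: n => [|n IH]; first by rewrite big_ord0 expr0 mul0r subrr.
  by rewrite big_ord_recr /= mulrDl IH exprS; ring.
set S := \sum_(j < n) y ^+ j.
have S0 : 0 <= S by apply: sumr_ge0 => j _; apply: exprn_ge0.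
have yn : 0 <= y ^+ n by apply: exprn_ge0.
have H1 : S * (1 - y) <= 1 by rewrite E; lra.
have H2 : S * (1 - t) <= 1 by apply: le_trans H1; nra.
have H3 : S * (1 - t) <= (1 - t) + y by nra.
have t1' : 0 < 1 - t by lra.
rewrite -(ler_pM2r t1') mulrDl divfK ?mul1r //; lra.
Qed.

Lemma sum_sub_fin (T : finType) (r : seq T) (F : T -> R) :
  uniq r -> (forall x, 0 <= F x) -> \sum_(x <- r) F x <= \sum_x F x.
Proof.
move=> ur F0; rewrite big_uniq // [X in _ <= X](bigID (mem r)) /=.
by rewrite lerDl sumr_ge0.
Qed.

Lemma step (Q : rtree -> Prop) (t B : R) : 0 <= t -> t < 1 -> 0 <= B ->
  bounded Q t B ->
  bounded (fun c => tcanon c = c /\ forall x, x \in children c -> Q x) t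
          (expR (t * B / (1 - t))).
Proof.
move=> t0 t1 B0 HB s us Hs.
set K := undup (flatten (map children s)).
have uK : uniq K := undup_uniq _.
have inK : forall c x, c \in s -> x \in children c -> x \in K.
  move=> c x cs xc; rewrite mem_undup; apply/flattenP.
  by exists (children c) => //; apply: map_f.
have KQ : forall k, k \in K -> Q k.
  move=> k; rewrite mem_undup => /flattenP [l /mapP [c cs ->] kc].
  by apply: (Hs c cs).2.
set N := sumn (map Defs.tsize s).
set n := size K.
set x0 := RNode [::].
set w := fun i : 'I_n => Defs.tsize (nth x0 K i).
have cnt_le : forall c x, c \in s -> (count_mem x (children c) < N.+1)%N.
  move=> c x cs; rewrite ltnS; apply: leq_trans (count_size _ _) _.
  apply: leq_trans (tsize_le_sumn cs); case: c {cs} => l /=.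
  by apply: leq_trans (size_le_sumn l) _.
pose phi c : {ffun 'I_n -> 'I_N.+1} :=
  [ffun i : 'I_n => inord (count_mem (nth x0 K i) (children c))].
pose G (f : {ffun 'I_n -> 'I_N.+1}) := \prod_(i < n) t ^+ (f i * w i).
have Gphi : forall c, c \in s -> G (phi c) = t ^+ (Defs.tsize c).-1.
  move=> c cs; rewrite /G prodrXr; congr (_ ^+ _).
  have -> : (\sum_(i < n) phi c i * w i =
             \sum_(i < n) count_mem (nth x0 K i) (children c) * w i)%N.
    by apply: eq_bigr => i _; rewrite ffunE inordK // cnt_le.
  have -> : (\sum_(i < n) count_mem (nth x0 K i) (children c) * w i =
             \sum_(k <- K) count_mem k (children c) * Defs.tsize k)%N.
    by rewrite (big_nth x0) big_mkord.
  rewrite sum_count_mem //; last by move=> y; apply: inK.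
  by case: (c).
have inj : {in s &, injective phi}.
  move=> c1 c2 H1 H2 E.
  have [C1 _] := Hs c1 H1; have [C2 _] := Hs c2 H2.
  move: E C1 C2 H1 H2; case: c1 => l1; case: c2 => l2 E C1 C2 H1 H2.
  congr RNode; apply: (sorted_eq leT_trans leT_anti).
  - exact: canon_sorted C1.
  - exact: canon_sorted C2.
  apply/allP => y yin; apply/eqP.
  have yK : y \in K.
    move: yin; rewrite mem_cat => /orP [] yin.
      exact: (inK _ _ H1).
    exact: (inK _ _ H2).
  have iy : (index y K < n)%N by rewrite index_mem.
  have := congr1 (fun f : {ffun 'I_n -> 'I_N.+1} => nat_of_ord (f (Ordinal iy))) E.
  rewrite /phi !ffunE /= nth_index // !inordK //.
    by move: (cnt_le _ y H2).
  by move: (cnt_le _ y H1).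
have G0 : forall f, 0 <= G f.
  by move=> f; apply: prodr_ge0 => i _; apply: exprn_ge0.
apply: (@le_trans _ _ (\sum_f G f)).
  rewrite (eq_big_seq (G \o phi)); last by move=> c cs /=; rewrite Gphi.
  rewrite -(big_map phi xpredT G).
  by apply: sum_sub_fin => //; rewrite map_inj_in_uniq.
rewrite /G -(bigA_distr_bigA (fun i (j : 'I_N.+1) => t ^+ (j * w i))) /=.
have wt : forall i, t ^+ (w i) <= t.
  move=> i; rewrite /w; case: (nth x0 K i) => l /=.
  by rewrite exprS ler_piMr // exprn_ile1 // ltW.
apply: (@le_trans _ _ (\prod_(i < n) expR (t ^+ (w i) / (1 - t)))).
  apply: ler_prod => i _; apply/andP; split.
    by apply: sumr_ge0 => j _; apply: exprn_ge0.
  apply: le_trans (expR_ge1Dx _).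
  under eq_bigr do rewrite mulnC exprM.
  apply: geom_bound => //; first exact: exprn_ge0.
rewrite -expR_sum ler_expR -mulr_suml ler_wpM2r //.
  by rewrite invr_ge0; lra.
have -> : \sum_(i < n) t ^+ w i = \sum_(k <- K) t ^+ Defs.tsize k.
  by rewrite (big_nth x0) big_mkord.
have -> : \sum_(k <- K) t ^+ Defs.tsize k = t * \sum_(k <- K) t ^+ (Defs.tsize k).-1.
  by rewrite mulr_sumr; apply: eq_bigr => -[l] _ /=; rewrite exprS.
by rewrite ler_wpM2l //; apply: HB.
Qed.

Definition Qd d c := tcanon c = c /\ (depth c <= d)%N.

Lemma bounded_Qd d (t : R) : 0 <= t -> t < 1 ->
  exists B, 0 <= B /\ bounded (Qd d) t B.
Proof.
move=> t0 t1; elim: d => [|d [B [B0 HB]]].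
  exists (expR (t * 0 / (1 - t))); split; first exact: expR_ge0.
  apply: (bounded_sub _ (@step (fun _ => False) t 0 t0 t1 (lexx 0) _)).
    move=> [l] [C D]; split; first done; move=> x xl.
    by have := depth_child xl; rewrite leqn0 in D; rewrite (eqP D).
  move=> [|y s] _ H; first by rewrite big_nil.
  by case: (H y (mem_head _ _)).
exists (expR (t * B / (1 - t))); split; first exact: expR_ge0.
apply: (bounded_sub _ (step t0 t1 B0 HB)).
move=> [l] [C D]; split; first done; move=> x xl; split.
  exact: canon_child C xl.
by have := depth_child xl; move=> H; rewrite -ltnS; apply: leq_trans H D.
Qed.

End Bound.

Section CPart.
Local Open Scope classical_set_scope.

Definition CP d n : set rtree :=
  [set c | tcanon c = c /\ Defs.tsize c = n /\ (depth c <= d)%N].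

Lemma fin_of_bound (S : set rtree) (M : nat) :
  (forall s, uniq s -> (forall c, c \in s -> S c) -> (size s <= M)%N) ->
  finite_set S.
Proof.
move=> H; apply: contrapT => nS.
have ex : forall k, exists s, [/\ uniq s, (forall c, c \in s -> S c) & size s = k].
  elim=> [|k [s [us Hs sk]]]; first by exists [::]; split.
  have : ~ (S `<=` [set` s]).
    by move=> sub; apply: nS; apply: sub_finite_set sub (finite_seq s).
  move=> /existsNP [x /not_implyP [Sx nx]].
  exists (x :: s); split => //=; last by rewrite sk.
    by rewrite us andbT; apply/negP.
  by move=> c; rewrite in_cons => /orP [/eqP ->|/Hs].
have [s [us Hs sk]] := ex M.+1.
by have := H s us Hs; rewrite sk ltnn.
Qed.

Lemma sum_const_seq (R : realType) (T : Type) (r : seq T) (x : R) :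
  (\sum_(c <- r) x = (size r)%:R * x)%R.
Proof.
elim: r => [|a r IH]; first by rewrite big_nil mul0r.
by rewrite big_cons IH /= -addn1 natrD mulrDl mul1r addrC.
Qed.

Section Main.
Variable R : realType.
Local Open Scope ring_scope.

Lemma CP_finite d n : finite_set (CP d n).
Proof.
have t0 : (0 : R) <= 2^-1 by rewrite invr_ge0.
have t1 : (2^-1 : R) < 1 by rewrite invf_lt1 // ltr1n.
have [B [B0 HB]] := bounded_Qd d t0 t1.
set X := B / (2^-1) ^+ n.-1.
have X0 : 0 <= X by rewrite divr_ge0 // exprn_ge0.
apply: (@fin_of_bound _ (Num.Def.archi_bound X)) => s us Hs.
have Hs' : forall c, c \in s -> Qd d c.
  by move=> c /Hs [C [_ D]]; split.
have := HB s us Hs'.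
rewrite (eq_big_seq (fun _ => (2^-1 : R) ^+ n.-1)); last first.
  by move=> c /Hs [_ [-> _]].
rewrite sum_const_seq => H.
have p0 : 0 < (2^-1 : R) ^+ n.-1 by rewrite exprn_gt0 // invr_gt0.
have : (size s)%:R <= X by rewrite ler_pdivlMr.
move=> /le_lt_trans /(_ (archi_boundP X0)).
by rewrite ltr_nat => /ltnW.
Qed.

Lemma iso_iff t u : iso t u <-> tcanon t = tcanon u.
Proof. by split; [apply: canon_iso|apply: iso_canon]. Qed.

Lemma A_dn_card d n : A_dn d n = #|` fset_set (CP d n)|.
Proof.
rewrite /A_dn /nb_classes.
pose cls (c : rtree) := [set u | tcanon u = c].
have E : [set [set u | iso t u] | t in [set t | Defs.tsize t = n /\ (depth t <= d)%N]]
       = [set cls c | c in CP d n].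
  apply/seteqP; split => X [t Ht <-].
    exists (tcanon t).
      by rewrite /CP /= canon_idem tsize_canon depth_canon; case: Ht.
    by apply/seteqP; split => u /=; rewrite iso_iff => ->.
  exists t; first by case: Ht => [_ [? ?]].
  case: Ht => [C _]; apply/seteqP; split => u /=; rewrite iso_iff C => ->.
    by [].
  by [].
rewrite E fset_set_image; last exact: CP_finite.
rewrite card_in_imfset //.
move=> c1 c2; rewrite !in_fset_set; try exact: CP_finite.
move=> /set_mem [C1 _] /set_mem [C2 _] Ec.
have : cls c1 c1 by [].
by rewrite Ec /cls /= C1.
Qed.

Lemma A_n_eq d n : (n <= d)%N -> A_dn d n = A_n n.
Proof.
move=> nd; rewrite /A_dn /A_n.
have -> : [set t | Defs.tsize t = n /\ (depth t <= d)%N] = [set t | Defs.tsize t = n].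
  apply/seteqP; split => t /=; first by case.
  move=> Ht; split => //; apply: leq_trans nd; rewrite -Ht.
  exact: ltnW (depth_lt_size t).
by [].
Qed.

Lemma A_mono d d' n : (d <= d')%N -> (A_dn d n <= A_dn d' n)%N.
Proof.
move=> dd; rewrite !A_dn_card; apply: fsubset_leq_card.
rewrite -fset_set_sub; try exact: CP_finite.
by move=> c [C [S D]]; split => //; split => //; apply: leq_trans dd.
Qed.

Lemma partial_seq d (t : R) M : exists s, [/\ uniq s, (forall c, c \in s -> Qd d c),
  \sum_(1 <= n < M) (A_dn d n)%:R * t ^+ n.-1 = \sum_(c <- s) t ^+ (Defs.tsize c).-1
  & (forall c, c \in s -> (Defs.tsize c < M)%N)].
Proof.
elim: M => [|M [s [us Hs E Hsz]]].
  by exists [::]; split => //; rewrite big_geq // big_nil.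
case: M us Hs E Hsz => [|M] us Hs E Hsz.
  exists s; split => //.
  by move=> c /Hsz.
set F := fset_set (CP d M.+1).
have inF : forall c, c \in (F : seq rtree) -> CP d M.+1 c.
  by move=> c cF; apply/set_mem; rewrite -in_fset_set //; exact: CP_finite.
exists (s ++ F); split.
- rewrite cat_uniq us fset_uniq andbT /=; apply/hasPn => c /inF [_ [Sc _]].
  by apply/negP => /Hsz; rewrite Sc ltnn.
- move=> c; rewrite mem_cat => /orP [/Hs //|/inF [C [_ D]]]; by split.
- rewrite big_nat_recr //= E big_cat /=; congr (_ + _).
  rewrite (eq_big_seq (fun _ => t ^+ M)); last by move=> c /inF [_ [-> _]].
  by rewrite sum_const_seq A_dn_card.
- move=> c; rewrite mem_cat => /orP [/Hsz /ltnW //|/inF [_ [-> _]]] //.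
Qed.

End Main.

End CPart.

Unset Implicit Arguments.
Set Strict Implicit.
Local Open Scope classical_set_scope.
Local Open Scope ring_scope.

Theorem proposition2 (R : realType) :
  (forall x : R, 0 <= x -> Phi_d d x @[d --> \oo] --> Phi x) /\
  (forall (d : nat) (t : R), 0 <= t -> t < 1 ->
     exists A : R, forall x : R, 0 <= x -> x <= t -> (Phi_d d x <= A%:E)%E).
Proof.
split.
  move=> x x0.
  have tge0 : forall d n, (0 <= ((A_dn d n)%:R * x ^+ n.-1)%:E)%E.
    by move=> d n; rewrite lee_fin mulr_ge0 // exprn_ge0.
  have tge0' : forall n, (0 <= ((A_n n)%:R * x ^+ n.-1)%:E)%E.
    by move=> n; rewrite lee_fin mulr_ge0 // exprn_ge0.
  have mono : {homo (fun d => Phi_d d x) : n m / (n <= m)%N >-> (n <= m)%E}.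
    move=> d d' dd; apply: lee_nneseries => [n _ _|n _]; first exact: tge0.
    by rewrite lee_fin ler_wpM2r ?exprn_ge0 // ler_nat (A_mono R).
  have cv := ereal_nondecreasing_cvgn mono.
  suff <- : ereal_sup (range (fun d => Phi_d d x)) = Phi x by [].
  apply/eqP; rewrite eq_le; apply/andP; split.
    apply: ge_ereal_sup => _ [d _ <-].
    apply: lee_nneseries => [n _ _|n _]; first exact: tge0.
    rewrite lee_fin ler_wpM2r ?exprn_ge0 // ler_nat.
    rewrite -(@A_n_eq (maxn d n)) ?leq_maxr //.
    by apply: (A_mono R); rewrite leq_maxl.
  apply: lime_le; first by apply: is_cvg_nneseries => n _ _; exact: tge0'.
  apply: nearW => M.
  apply: le_trans (le_ereal_sup_tmp _); last first.
    exists (Phi_d M x); first by exists M.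
    exact: lexx.
  apply: le_trans (nneseries_lim_ge M _); last by move=> n _ _; exact: tge0.
  rewrite le_eqVlt; apply/orP; left; apply/eqP.
  apply: eq_big_nat => n /andP [_ nM].
  by rewrite (@A_n_eq M) // ltnW.
move=> d t t0 t1.
have [B [B0 HB]] := bounded_Qd d t0 t1.
exists B => x x0 xt.
apply: (@le_trans _ _ (Phi_d d t)).
  apply: lee_nneseries => [n _ _|n _].
    by rewrite lee_fin mulr_ge0 // exprn_ge0.
  rewrite lee_fin ler_wpM2l //.
  by apply: lerXn2r => //; rewrite inE //=; apply: le_trans xt.
apply: lime_le.
  by apply: is_cvg_nneseries => n _ _; rewrite lee_fin mulr_ge0 // exprn_ge0.
apply: nearW => M.
rewrite sumEFin lee_fin.
have [s [us Hs E _]] := partial_seq d t M.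
by rewrite E; apply: HB.
Qed.
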